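(* Let $4\le k\le\infty$ and let $\Gamma=(V,E)$ be a graph of girth $\geq 4$. Let $\widetilde\Gamma$ be the graph whose vertices are the pairs $(v,\sigma)$ with $v\in V$, $\sigma\in V\cup E$ and $v\subset\sigma$ (i.e. $\sigma=v$ or $\sigma$ is an edge containing $v$), where $(v,\sigma)$ and $(v',\sigma')$ are adjacent if either $v=v'$, or $v,v'$ are adjacent in $\Gamma$ and $\sigma\in\{v,vv'\}$, $\sigma'\in\{v',vv'\}$. Then the flag complex spanned on $\widetilde\Gamma$ is $k$-large if and only if $\Gamma$ has girth $\geq k$.
   Context: The flag complex spanned on a graph has a simplex for each finite clique. A cycle is a subcomplex that is a subdivision of the circle; it is full if every simplex spanned by its vertices lies in it. A flag complex is $k$-large if it has no full cycle of length $<k$. *)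

(* Defs.v *)
From mathcomp Require Import all_boot.
From Stdlib Require Import List.
Set Implicit Arguments. Unset Strict Implicit. Unset Printing Implicit Defensive.

Definition simple_graph (V : Type) (adj : V -> V -> Prop) : Prop :=
  (forall x y, adj x y -> adj y x) /\ (forall x, ~ adj x x).

(* Extended naturals for 4 <= k <= oo : [None] stands for oo. *)
Definition lt_ext (n : nat) (k : option nat) : Prop :=
  match k with Some m => n < m | None => True end.
Definition le_ext (n : nat) (k : option nat) : Prop :=
  match k with Some m => n <= m | None => True end.

Definition graph_cycle (V : Type) (adj : V -> V -> Prop) (n : nat)
    (c : 'I_n -> V) : Prop :=
  3 <= n /\ injective c /\ forall i : 'I_n, adj (c i) (c (ordS i)).

Definition girth_ge (V : Type) (adj : V -> V -> Prop) (k : option nat) : Prop :=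
  forall (n : nat) (c : 'I_n -> V), graph_cycle adj c -> ~ lt_ext n k.

Definition finite_nonempty (T : Type) (s : T -> Prop) : Prop :=
  (exists l : list T, forall x, s x <-> In x l) /\ (exists x, s x).

Definition flag_simplex (T : Type) (adj : T -> T -> Prop) (s : T -> Prop) : Prop :=
  finite_nonempty s /\ forall x y, s x -> s y -> x <> y -> adj x y.

Definition cycle_simplex (T : Type) (n : nat) (c : 'I_n -> T) (s : T -> Prop) : Prop :=
  exists i : 'I_n,
    (forall x, s x <-> x = c i) \/ (forall x, s x <-> x = c i \/ x = c (ordS i)).

Definition complex_cycle (T : Type) (adj : T -> T -> Prop) (n : nat)
    (c : 'I_n -> T) : Prop :=
  3 <= n /\ injective c /\
  forall s, cycle_simplex c s -> flag_simplex adj s.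

Definition full_cycle (T : Type) (adj : T -> T -> Prop) (n : nat)
    (c : 'I_n -> T) : Prop :=
  complex_cycle adj c /\
  forall s, flag_simplex adj s -> (forall x, s x -> exists i, x = c i) ->
    cycle_simplex c s.

Definition k_large (T : Type) (adj : T -> T -> Prop) (k : option nat) : Prop :=
  forall (n : nat) (c : 'I_n -> T), full_cycle adj c -> ~ lt_ext n k.

(* The graph tilde Gamma.  A vertex (v, sigma) is encoded by a pair (v, w)
   with w = v (sigma = v) or w adjacent to v (sigma = the edge vw). *)
Definition tvert (V : Type) (adj : V -> V -> Prop) : Type :=
  {p : V * V | p.2 = p.1 \/ adj p.1 p.2}.

Definition tadj (V : Type) (adj : V -> V -> Prop) (x y : tvert adj) : Prop :=
  let v := (proj1_sig x).1 in let w := (proj1_sig x).2 in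
  let v' := (proj1_sig y).1 in let w' := (proj1_sig y).2 in
  x <> y /\
  (v = v' \/ (adj v v' /\ (w = v \/ w = v') /\ (w' = v' \/ w' = v))).

(* Main.v *)
Require Import Defs.
From mathcomp Require Import all_boot.
From mathcomp Require Import zify.
From Stdlib Require Import Classical List.
Set Implicit Arguments. Unset Strict Implicit.

Lemma lift_ordS n' (d : 'I_n'.+1) (j : 'I_n') : lift d (ordS j) = ordS (lift d j) \/ (ordS (lift d j) = d /\ lift d (ordS j) = ordS d).
Proof.
suff: (val (lift d (ordS j)) = val (ordS (lift d j))) \/ (val (ordS (lift d j)) = val d /\ val (lift d (ordS j)) = val (ordS d)).
  by case=> [/val_inj->|[/val_inj -> /val_inj ->]]; [left|right].
case: d j => b Hb [a Ha].
rewrite /= /bump /=.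
case: (ltnP a.+1 n') => H1.
- rewrite (modn_small H1).
  case: (leqP b a) => H2; case: (leqP b a.+1) => H3 /=.
  + left; rewrite modn_small; lia.
  + lia.
  + right; rewrite ?modn_small; lia.
  + left; rewrite modn_small; lia.
- have ea : a.+1 = n' by lia.
  rewrite ea modnn.
  case: (leqP b a) => H2; case: (leqP b 0) => H3 /=.
  + right. have -> : b = 0 by lia. rewrite add1n ea modnn modn_small; lia.
  + left; rewrite add1n ea modnn; lia.
  + lia.
  + right; have eb : b = n' by lia. rewrite addn0 ea eb modnn modn_small; lia.
Qed.

Lemma ordS_iter n (a : 'I_n) k : val (iter k (@ordS n) a) = (a + k) %% n.
Proof.
elim: k => [|k IH] /=; first by rewrite addn0 modn_small.
by rewrite IH -addn1 modnDml addn1 addnS.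
Qed.

Lemma ordS_iter_le n (a : 'I_n) k : 0 < k -> iter k (@ordS n) a = a -> n <= k.
Proof.
move=> k0 /(congr1 val); rewrite ordS_iter => E.
have n0 : 0 < n by case: a {E} => /= x; lia.
have : (a + k == a + 0 %[mod n]) by rewrite E addn0 modn_small.
rewrite eqn_modDl mod0n => /eqP /eqP.
rewrite -/(dvdn n k) => /dvdn_leq; apply; done.
Qed.

Section T.
Variables (V : Type) (adj : V -> V -> Prop).
Hypothesis Hsym : forall x y, adj x y -> adj y x.
Hypothesis Hirr : forall x, ~ adj x x.

Lemma tadj_sym (x y : tvert adj) : tadj x y -> tadj y x.
Proof.
case=> ne [E|[a [w1 w2]]]; split; first (by move=> E'; apply: ne); first by left.
  by move=> E'; apply: ne.
by right; split; [apply: Hsym | split].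
Qed.

Lemma tadj_sigma (A B C D : tvert adj) :
  tadj B C -> tadj D A ->
  (proj1_sig A).1 = (proj1_sig B).1 -> (proj1_sig C).1 = (proj1_sig D).1 ->
  (proj1_sig A).1 <> (proj1_sig C).1 -> tadj A C.
Proof.
case: A B C D => [[a1 a2] pa] [[b1 b2] pb] [[c1 c2] pc] [[d1 d2] pd] /=.
rewrite /tadj /=.
move=> [_ H1] [_ H2] eab ecd nac; subst b1 d1.
split; first by move=> E; apply: nac; move: E => [->].
case: H1 => [//|[h1 [h2 h3]]]; case: H2 => [E|[h4 [h5 h6]]]; first by case: nac.
by right; split => //.
Qed.
End T.

Section Col.
Variables (V : Type) (adj : V -> V -> Prop).
Hypothesis Hirr : forall x, ~ adj x x.

Definition steprel n (p : 'I_n -> V) := forall i, p i = p (ordS i) \/ adj (p i) (p (ordS i)).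
Definition fibcons n (p : 'I_n -> V) := forall i j, p i = p j -> i = j \/ j = ordS i \/ i = ordS j.
Definition three n (p : 'I_n -> V) := exists a b c, p a <> p b /\ p b <> p c /\ p a <> p c.

Lemma three_ge3 n (p : 'I_n -> V) : three p -> 3 <= n.
Proof.
case=> a [b [c [h1 [h2 h3]]]].
have u : uniq [:: a; b; c].
  rewrite /= !inE !negb_or /= andbT.
  by rewrite -andbA; apply/and3P; split; apply/eqP => E; subst; [exact: h1|exact: h3|exact: h2].
have := uniq_leq_size u (s2 := enum 'I_n) (fun x _ => mem_enum _ x).
by rewrite size_enum_ord.
Qed.

Lemma collapse n (p : 'I_n -> V) : steprel p -> fibcons p -> three p ->
  exists m, m <= n /\ exists c : 'I_m -> V, graph_cycle adj c.
Proof.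
elim: n p => [|n' IH] p Hs Hf Ht.
  by have := three_ge3 Ht.
have n3 := three_ge3 Ht.
case: (classic (exists d, p d = p (ordS d))) => [[d Hd]|Hno].
- pose p' := fun j : 'I_n' => p (lift d j).
  have [m [Hm Hc]] : exists m, m <= n' /\ exists c : 'I_m -> V, graph_cycle adj c.
    apply: (IH p').
    + move=> j; rewrite /p'; case: (lift_ordS d j) => [->|[E1 ->]]; first exact: Hs.
      by have := Hs (lift d j); rewrite E1 Hd.
    + move=> j l; rewrite /p' => /Hf [/lift_inj->|[E|E]]; [by left| |].
      * case: (lift_ordS d j) => [E2|[E2 _]].
          by right; left; apply: (@lift_inj _ d); rewrite E E2.
        by have := neq_lift d l; rewrite E E2 eqxx.
      * case: (lift_ordS d l) => [E2|[E2 _]].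
          by right; right; apply: (@lift_inj _ d); rewrite E E2.
        by have := neq_lift d j; rewrite E E2 eqxx.
    + have cov : forall i, exists j, p i = p' j.
        move=> i; rewrite /p'.
        case: (unliftP d i) => [j ->|E]; first by exists j.
        have : ordS d != d.
          apply/eqP => /(congr1 val) /=; case: (ltnP d.+1 n'.+1) => Hd1; [rewrite modn_small //; lia|]. have -> : d.+1 = n'.+1 by have := ltn_ord d; lia. rewrite modnn; lia.
        case: (unliftP d (ordS d)) => [j Ej _|E2]; last by rewrite E2 eqxx.
        by exists j; rewrite E Hd Ej.
      case: Ht => a [b [c [h1 [h2 h3]]]].
      case: (cov a) => a' Ea; case: (cov b) => b' Eb; case: (cov c) => c' Ec.
      by exists a', b', c'; rewrite -Ea -Eb -Ec.
  by exists m; split => //; lia.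
- exists n'.+1; split => //; exists p; split => //; split.
  + move=> i j Eij; case: (Hf _ _ Eij) => [//|[E|E]]; case: Hno.
      by exists i; rewrite -E.
    by exists j; rewrite -E.
  + move=> i; case: (Hs i) => // E; case: Hno; by exists i.
Qed.
End Col.

Section F.
Variables (V : Type) (adj : V -> V -> Prop).
Hypothesis Hsym : forall x y, adj x y -> adj y x.
Variables (n : nat) (c : 'I_n -> tvert adj).
Hypothesis Hfull : full_cycle (@tadj V adj) c.

Lemma pair_flag x y : tadj x y -> flag_simplex (@tadj V adj) (fun z => z = x \/ z = y).
Proof.
move=> Hxy; split.
  split; last by exists x; left.
  exists (x :: y :: nil) => z /=; split.
    by case=> ->; auto.
  by case=> [->|[->|[]]]; auto.
move=> a b [->|->] [->|->] ne //; last exact: tadj_sym.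
Qed.

Lemma full_adj i j : tadj (c i) (c j) -> i = j \/ j = ordS i \/ i = ordS j.
Proof.
move=> H.
case: Hfull => [[_ [Hinj _]] Hf].
have := Hf _ (pair_flag H).
case.
  by move=> z [->|->]; eauto.
move=> l [E|E].
  left; apply: Hinj; have := proj1 (E (c i)) (or_introl erefl);
  have := proj1 (E (c j)) (or_intror erefl); congruence.
have := proj1 (E (c i)) (or_introl erefl).
have := proj1 (E (c j)) (or_intror erefl).
have := proj2 (E (c l)) (or_introl erefl).
have := proj2 (E (c (ordS l))) (or_intror erefl).
move=> [/Hinj|/Hinj] e1 [/Hinj|/Hinj] e2 [/Hinj|/Hinj] e3 [/Hinj|/Hinj] e4; subst; auto.
Qed.

Lemma full_step i : c i = c (ordS i) \/ tadj (c i) (c (ordS i)).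
Proof.
case: (classic (c i = c (ordS i))) => [|ne]; first by left.
right; case: Hfull => [[_ [_ Hc]] _].
have [_ Hcl] := Hc (fun z => z = c i \/ z = c (ordS i)) (ex_intro _ i (or_intror (fun x => iff_refl _))).
by apply: Hcl; auto.
Qed.
End F.

Lemma nc n' k l : (k < n'.+1 /\ l < n'.+1 /\ k <> l /\ l <> k.+1 /\ k <> l.+1 /\ ~(k = 0 /\ l = n') /\ ~(l = 0 /\ k = n')) ->
  ~ ((inord k : 'I_n'.+1) = inord l \/ (inord l : 'I_n'.+1) = ordS (inord k) \/ (inord k : 'I_n'.+1) = ordS (inord l)).
Proof.
move=> [hk [hl H]].
case=> [|[]] /(congr1 val) /=; rewrite !inordK //.
- lia.
- case: (ltnP k.+1 n'.+1) => h; first (rewrite modn_small //; lia).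
  have e : k.+1 = n'.+1 by lia. rewrite e modnn; lia.
- case: (ltnP l.+1 n'.+1) => h; first (rewrite modn_small //; lia).
  have e : l.+1 = n'.+1 by lia. rewrite e modnn; lia.
Qed.


Section G.
Variables (V : Type) (adj : V -> V -> Prop).
Hypothesis Hsym : forall x y, adj x y -> adj y x.

Lemma full_fib n (c : 'I_n -> tvert adj) : full_cycle (@tadj V adj) c ->
  forall i j, (proj1_sig (c i)).1 = (proj1_sig (c j)).1 -> i = j \/ j = ordS i \/ i = ordS j.
Proof.
move=> Hf i j E.
case: (classic (c i = c j)) => [e|ne].
  by left; case: Hf => [[_ [Hinj _]] _]; apply: Hinj.
by apply: (full_adj Hsym Hf); split => //; left.
Qed.

Lemma three_full n' (c : 'I_n'.+4 -> tvert adj) : full_cycle (@tadj V adj) c ->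
  three (fun i => (proj1_sig (c i)).1).
Proof.
move=> Hf.
pose q k := (proj1_sig (c (inord k))).1.
have F : forall k l, (k < n'.+4 /\ l < n'.+4 /\ k <> l /\ l <> k.+1 /\ k <> l.+1 /\ ~(k = 0 /\ l = n'.+3) /\ ~(l = 0 /\ k = n'.+3)) -> q k <> q l.
  by move=> k l H E; apply: (nc H); apply: (full_fib Hf).
have T : forall k l, (k < n'.+4 /\ l < n'.+4 /\ k <> l /\ l <> k.+1 /\ k <> l.+1 /\ ~(k = 0 /\ l = n'.+3) /\ ~(l = 0 /\ k = n'.+3)) -> ~ tadj (c (inord k)) (c (inord l)).
  by move=> k l H E; apply: (nc H); apply: (full_adj Hsym Hf).
have S : forall k, k < n'.+3 -> c (inord k) = c (inord k.+1) \/ tadj (c (inord k)) (c (inord k.+1)).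
  move=> k hk; have -> : (inord k.+1 : 'I_n'.+4) = ordS (inord k).
    by apply: val_inj => /=; rewrite !inordK ?modn_small //; lia.
  exact: (full_step Hf).
have Sl : c (inord n'.+3) = c (inord 0) \/ tadj (c (inord n'.+3)) (c (inord 0)).
  have -> : (inord 0 : 'I_n'.+4) = ordS (inord n'.+3).
    by apply: val_inj => /=; rewrite !inordK ?modnn //; lia.
  exact: (full_step Hf).
have Cinj : forall k l, k < n'.+4 -> l < n'.+4 -> k <> l -> c (inord k) <> c (inord l).
  move=> k l hk hl ne E; case: Hf => [[_ [Hinj _]] _]; have := congr1 val (Hinj _ _ E).
  by rewrite /= !inordK.
have q02 : q 0 <> q 2 by apply: F; lia.
have q13 : q 1 <> q 3 by apply: F; lia.
suff : exists a b d, q a <> q b /\ q b <> q d /\ q a <> q d.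
  by case=> a [b [d H]]; exists (inord a), (inord b), (inord d).
case: (classic (q 1 <> q 0 /\ q 1 <> q 2)) => [[h1 h2]|h12].
  exists 0, 1, 2; split; [by auto|split; by auto].
case: (classic (q 3 <> q 0 /\ q 3 <> q 2)) => [[h1 h2]|h32].
  exists 0, 2, 3; split; [by auto|split; by auto].
have e1 : q 1 = q 0 \/ q 1 = q 2 by apply: NNPP => H; apply: h12; split => E; apply: H; auto.
have e3 : q 3 = q 0 \/ q 3 = q 2 by apply: NNPP => H; apply: h32; split => E; apply: H; auto.
case: e1 => e1; case: e3 => e3; try by (case: q13; congruence).
- (* a a b b *)
  case: (eqVneq n' 0) => [e0|n0].
  + exfalso; apply: (T 0 2); first lia.
    apply: (@tadj_sigma _ _ _ (c (inord 1)) _ (c (inord 3))).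
    * by case: (S 1 ltac:(lia)) => // E; case: (Cinj 1 2); try lia.
    * have e3' : 3 = n'.+3 by lia.
      by rewrite e3'; case: Sl => // E; case: (Cinj n'.+3 0); try lia.
    * by rewrite -/(q 0) -/(q 1) e1.
    * by rewrite -/(q 2) -/(q 3) e3.
    * exact: q02.
  + exists 0, 2, 4; split => //; split.
      by apply: F; lia.
    by rewrite -e1; apply: F; lia.
- (* a b b a *)
  case: (eqVneq n' 0) => [e0|n0].
  + exfalso; apply: (T 3 1); first lia.
    apply: (@tadj_sigma _ _ _ (c (inord 0)) _ (c (inord 2))).
    * by case: (S 0 ltac:(lia)) => // E; case: (Cinj 0 1); try lia.
    * by case: (S 2 ltac:(lia)) => // E; case: (Cinj 2 3); try lia.
    * by rewrite -/(q 0) -/(q 3) e3.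
    * by rewrite -/(q 1) -/(q 2) e1.
    * rewrite -/(q 3) -/(q 1) e3 e1; by auto.
  + by case: (F 0 3); [lia|].
Qed.
End G.

Lemma I3_cases (i j : 'I_3) : i = j \/ j = ordS i \/ i = ordS j.
Proof.
suff : val i = val j \/ val j = val (ordS i) \/ val i = val (ordS j).
  by case=> [/val_inj|[/val_inj|/val_inj]]; auto.
case: i j => [a ha] [b hb] /=.
by case: a ha => [|[|[|?]]] ha //; case: b hb => [|[|[|?]]] hb //; auto.
Qed.

Lemma I3 (i : 'I_3) : i = inord 0 \/ i = inord 1 \/ i = inord 2.
Proof.
suff : val i = 0 \/ val i = 1 \/ val i = 2.
  by case=> [e|[e|e]]; [left|right;left|right;right]; apply: val_inj; rewrite /= inordK // e.
case: i => [[|[|[|?]]] h] //=; auto.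
Qed.

Lemma full_ge4 (V : Type) (adj : V -> V -> Prop) (Hsym : forall x y, adj x y -> adj y x) n (c : 'I_n -> tvert adj) :
  full_cycle (@tadj V adj) c -> 4 <= n.
Proof.
move=> Hf.
have n3 : 3 <= n by case: Hf => [[]].
case: (ltnP 3 n) => // h.
have e : n = 3 by lia.
subst n.
have Hinj : injective c by case: Hf => [[_ []]].
have := proj2 Hf (fun x => exists i, x = c i).
case.
- split.
    split; last by exists (c ord0); exists ord0.
    exists [:: c (inord 0); c (inord 1); c (inord 2)] => x /=; split.
      by case=> i ->; case: (I3 i) => [->|[->|->]]; auto.
    by case=> [<-|[<-|[<-|[]]]]; eexists.
  move=> x y [i ->] [j ->] ne.
  case: (I3_cases i j) => [e|[e|e]]; first by case: ne; rewrite e.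
    by case: (full_step Hf i) => //; rewrite -e.
  case: (full_step Hf j) => [E|/(tadj_sym Hsym) H]; last by rewrite e.
  by case: ne; rewrite E -e.
- by move=> x [i ->]; exists i.
- move=> l [E|E].
    have ei := proj1 (E (c (ordS l))) (ex_intro _ _ erefl).
    by have := ordS_iter_le (k := 1) erefl (Hinj _ _ ei).
  have ei := proj1 (E (c (ordS (ordS l)))) (ex_intro _ _ erefl).
  case: ei => /Hinj ei.
    by have := ordS_iter_le (k := 2) erefl ei.
  by have := ordS_iter_le (k := 1) erefl (ordS_inj ei).
Qed.

Section S.
Variables (V : Type) (adj : V -> V -> Prop).
Hypothesis Hsym : forall x y, adj x y -> adj y x.
Hypothesis Hirr : forall x, ~ adj x x.

Lemma shorten n0 (c : 'I_n0.+1 -> V) (i j : 'I_n0.+1) : graph_cycle adj c -> adj (c j) (c i) ->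
  (i : nat) + 2 <= (j : nat) -> exists c' : 'I_((j : nat) - (i : nat)).+1 -> V, graph_cycle adj c'.
Proof.
move=> [h3 [Hinj Hc]] Hji hij.
have hj := ltn_ord j.
exists (fun t => c (inord (i + t))); split; first lia.
split.
  move=> t t' /Hinj /(congr1 val) /=.
  have ht := ltn_ord t; have ht' := ltn_ord t'.
  rewrite !inordK; try lia.
  by move=> e; apply: val_inj => /=; lia.
move=> t /=.
have ht := ltn_ord t.
case: (ltnP (t : nat) (j - i)) => h.
  have E : (inord (i + ordS t) : 'I_n0.+1) = ordS (inord (i + t)).
    apply: val_inj => /=; rewrite !inordK; rewrite ?modn_small; lia.
  rewrite E; exact: Hc.
have E1 : (inord (i + ordS t) : 'I_n0.+1) = i.
  apply: val_inj => /=; have -> : t.+1 = ((j : nat) - (i : nat)).+1 by lia.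
  by rewrite modnn addn0 inordK.
have E2 : (inord (i + t) : 'I_n0.+1) = j.
  by apply: val_inj => /=; rewrite inordK; lia.
by rewrite E1 E2.
Qed.

Definition induced n (c : 'I_n -> V) := forall i j, adj (c i) (c j) -> j = ordS i \/ i = ordS j.

Lemma min_induced n (c : 'I_n -> V) : graph_cycle adj c ->
  exists m, m <= n /\ exists c' : 'I_m -> V, graph_cycle adj c' /\ induced c'.
Proof.
elim/ltn_ind: n c => n IH c Hc.
case: n IH c Hc => [|n0] IH c Hc; first by case: Hc.
case: (classic (exists i j, adj (c i) (c j) /\ ~ (j = ordS i \/ i = ordS j))); last first.
  move=> H; exists n0.+1; split => //; exists c; split => // i j a.
  by apply: NNPP => H'; apply: H; exists i, j.
move=> [i [j [a nc]]].
have ne : (i : nat) <> (j : nat) by move=> /val_inj e; subst; exact: (Hirr a).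
have gen : forall i j : 'I_n0.+1, adj (c j) (c i) -> (i : nat) < (j : nat) -> ~ (j = ordS i \/ i = ordS j) ->
    exists m, m <= n0.+1 /\ exists c' : 'I_m -> V, graph_cycle adj c' /\ induced c'.
  move=> i' j' a' lt nc'.
  have h2 : (i' : nat) + 2 <= (j' : nat).
    case: (leqP ((i' : nat) + 2) (j' : nat)) => // h; case: nc'; left.
    have hj' := ltn_ord j'; apply: val_inj => /=; rewrite modn_small; lia.
  have h0 : ~ ((i' : nat) = 0 /\ (j' : nat) = n0).
    move=> [e1 e2]; case: nc'; right; apply: val_inj => /=; rewrite e1 e2 modnn //.
  have [c' Hc'] := shorten Hc a' h2.
  have := ltn_ord j'; move=> hj.
  have [m [hm Hm]] := IH _ (ltac:(lia) : ((j' : nat) - (i' : nat)).+1 < n0.+1) c' Hc'.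
  by exists m; split => //; lia.
case: (ltnP ((i : nat)) ((j : nat))) => h.
  by apply: (gen i j) => //; apply: Hsym.
apply: (gen j i) => //; first lia.
by case=> [e|e]; apply: nc; auto.
Qed.
End S.

Section D.
Variables (V : Type) (adj : V -> V -> Prop).
Hypothesis Hsym : forall x y, adj x y -> adj y x.
Hypothesis Hirr : forall x, ~ adj x x.

Definition dv (x : V) : tvert adj :=
  exist (fun p : V * V => p.2 = p.1 \/ adj p.1 p.2) (x, x) (or_introl erefl).

Lemma tilde_full m (c : 'I_m -> V) : graph_cycle adj c -> induced adj c -> 4 <= m ->
  full_cycle (@tadj V adj) (fun i => dv (c i)).
Proof.
move=> [h3 [Hinj Hc]] Hind h4.
have dinj : injective (fun i => dv (c i)).
  by move=> i j /(congr1 (fun x => (proj1_sig x).1)) /= /Hinj.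
have Sne : forall i : 'I_m, ordS i <> i.
  by move=> i /(ordS_iter_le (k := 1) erefl); lia.
have Tadj : forall i, tadj (dv (c i)) (dv (c (ordS i))).
  move=> i; split; first by move=> /dinj /esym /Sne.
  by right; split => /=; [exact: Hc|split; left].
have TadjS : forall i j, j = ordS i \/ i = ordS j -> tadj (dv (c i)) (dv (c j)).
  move=> i j [->|->]; first exact: Tadj.
  have [ne _] := Tadj j; split; first by move=> e; apply: ne.
  by right; split => /=; [apply: Hsym; exact: Hc|split; left].
have Tinv : forall i j, tadj (dv (c i)) (dv (c j)) -> j = ordS i \/ i = ordS j.
  move=> i j [ne [/= e|[/= a _]]]; last exact: Hind.
  by case: ne; rewrite (Hinj _ _ e).
split.
  split => //; split => // s [i [E|E]].
    split; first split.
    + by exists (dv (c i) :: nil) => x; rewrite E /=; split; [move=> ->; left|case=> [<-|[]]].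
    + by exists (dv (c i)); rewrite E.
    + by move=> x y /E -> /E ->.
  split; first split.
  + exists (dv (c i) :: dv (c (ordS i)) :: nil) => x; rewrite E /=.
    by split; [case=> ->; auto|case=> [<-|[<-|[]]]; auto].
  + by exists (dv (c i)); rewrite E; left.
  + move=> x y /E [->|->] /E [->|->] ne //; apply: TadjS; auto.
move=> s [[_ [x0 sx0]] Hcl] Him.
have [i ei] := Him _ sx0; subst x0.
case: (classic (forall y, s y -> y = dv (c i))) => [Hall|].
  by exists i; left => x; split; [exact: Hall|move=> ->].
move=> H; have [y Hy] := not_all_ex_not _ _ H; have [sy ney] := imply_to_and _ _ Hy.
have [j ej] := Him _ sy; subst y.
have tij := Hcl _ _ sx0 sy (fun e => ney (esym e)).
have key : forall a, s (dv (c a)) -> s (dv (c (ordS a))) -> cycle_simplex (fun i => dv (c i)) s.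
  move=> a sa sb; exists a; right => x; split; last by case=> ->.
  move=> sx; have [l el] := Him _ sx; subst x.
  case: (classic (l = a)) => [->|nla]; first by left.
  case: (classic (l = ordS a)) => [->|nlb]; first by right.
  have t1 := Tinv _ _ (Hcl _ _ sx sa (fun e => nla (dinj _ _ e))).
  have t2 := Tinv _ _ (Hcl _ _ sx sb (fun e => nlb (dinj _ _ e))).
  exfalso.
  case: t1 => t1; last by apply: nlb.
  case: t2 => t2; first by apply: nla; apply: ordS_inj.
  have := ordS_iter_le (k := 3) (a := a) erefl; rewrite /= -t2 -t1 => /(_ erefl).
  lia.
case: (Tinv _ _ tij) => e.
  by apply: (key i) => //; rewrite -e.
by apply: (key j) => //; rewrite -e.
Qed.
End D.

Theorem lemma2p9 (V : Type) (adj : V -> V -> Prop) (k : option nat) :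
  simple_graph adj -> le_ext 4 k -> girth_ge adj (Some 4) ->
  (k_large (@tadj V adj) k <-> girth_ge adj k).
Proof.
move=> [Hsym Hirr] Hk Hg; split.
- move=> Hl n c Hc Hlt.
  have [m [hm [c' [Hc' Hind]]]] := min_induced Hsym Hirr Hc.
  have h4 : 4 <= m.
    have := Hg m c' Hc'; rewrite /lt_ext; case: (ltnP m 4) => //.
  apply: (Hl m _ (tilde_full Hsym Hc' Hind h4)).
  by case: k Hk Hlt {Hl} => //= k' _ ?; lia.
- move=> Hgk n c Hf Hlt.
  have h4 := full_ge4 Hsym Hf.
  case: n c Hf Hlt h4 => [|[|[|[|n']]]] // c Hf Hlt _.
  have Ht := three_full Hsym Hf.
  have Hs : steprel adj (fun i => (proj1_sig (c i)).1).
    move=> i; case: (full_step Hf i) => [->|[_ [e|[a _]]]]; by auto.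
  have Hfc : fibcons (fun i => (proj1_sig (c i)).1).
    move=> i j; apply: (full_fib Hsym Hf).
  have [m [hm [c' Hc']]] := collapse Hs Hfc Ht.
  apply: (Hgk m c' Hc').
  by case: k Hk Hlt {Hgk} => //= k' _ ?; lia.
Qed.
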